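(* Every (finite or infinite) half graph $\Gamma$ with $|V(\Gamma)|\geq 4$ is prime.
   Context: A bipartite graph $\Gamma$ with bipartition $\{X,Y\}$ is a half graph if there exist a linear order $L$ on $X$ and a bijection $\varphi:X\to Y$ with $E(\Gamma)=\{\{x,\varphi(x')\}: x\leq x'\bmod L\}$. A module of a graph is a set $M$ of vertices such that every vertex outside $M$ is adjacent to all or none of $M$; $\emptyset$, $V(\Gamma)$ and singletons are trivial; $\Gamma$ is prime if $|V(\Gamma)|\geq3$ and all modules are trivial. *)

(* Defs.v *)
Definition linear_order_on {V : Type} (X : V -> Prop) (L : V -> V -> Prop) : Prop :=
  (forall x, X x -> L x x) /\
  (forall x y, X x -> X y -> L x y -> L y x -> x = y) /\
  (forall x y z, X x -> X y -> X z -> L x y -> L y z -> L x z) /\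
  (forall x y, X x -> X y -> L x y \/ L y x).

Definition bijection_on {V : Type} (X Y : V -> Prop) (phi : V -> V) : Prop :=
  (forall x, X x -> Y (phi x)) /\
  (forall x x', X x -> X x' -> phi x = phi x' -> x = x') /\
  (forall y, Y y -> exists x, X x /\ phi x = y).

Definition is_bipartition {V : Type} (X Y : V -> Prop) : Prop :=
  (forall v, X v \/ Y v) /\ (forall v, ~ (X v /\ Y v)).

Definition half_graph {V : Type} (adj : V -> V -> Prop) (X Y : V -> Prop) : Prop :=
  is_bipartition X Y /\
  exists (L : V -> V -> Prop) (phi : V -> V),
    linear_order_on X L /\ bijection_on X Y phi /\
    forall u v, adj u v <->
      exists x x', X x /\ X x' /\ L x x' /\
        ((u = x /\ v = phi x') \/ (u = phi x' /\ v = x)).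

Definition is_module {V : Type} (adj : V -> V -> Prop) (M : V -> Prop) : Prop :=
  forall v, ~ M v ->
    (forall m, M m -> adj v m) \/ (forall m, M m -> ~ adj v m).

Definition trivial_set {V : Type} (M : V -> Prop) : Prop :=
  (forall v, ~ M v) \/ (forall v, M v) \/ (exists a, forall v, M v <-> v = a).

Definition at_least_3_vertices (V : Type) : Prop :=
  exists a b c : V, a <> b /\ a <> c /\ b <> c.

Definition at_least_4_vertices (V : Type) : Prop :=
  exists a b c d : V, a <> b /\ a <> c /\ a <> d /\ b <> c /\ b <> d /\ c <> d.

Definition prime_graph {V : Type} (adj : V -> V -> Prop) : Prop :=
  at_least_3_vertices V /\ forall M, is_module adj M -> trivial_set M.

(* Main.v *)
Require Import Defs.
From Stdlib Require Import Classical.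

Theorem corollary5p4 (V : Type) (adj : V -> V -> Prop) (X Y : V -> Prop) :
  half_graph adj X Y -> at_least_4_vertices V -> prime_graph adj.
Proof.
  intros [[HXY Hdisj] [L [phi [[Lrefl [Lanti [Ltrans Ltot]]] [[phiY [phiinj phisurj]] Hadj]]]]] H4.
  split.
  { destruct H4 as (a&b&c&d&?&?&?&?&?&?). exists a, b, c; tauto. }
  intros M HM.
  assert (sym : forall u v, adj u v -> adj v u).
  { intros u v H; rewrite Hadj in H |- *.
    destruct H as (x&x'&Hx&Hx'&Hl&H); exists x, x'; tauto. }
  assert (adjXY : forall a b, X a -> X b -> adj a (phi b) <-> L a b).
  { intros a b Ha Hb; rewrite Hadj; split.
    - intros (x&x'&Hx&Hx'&Hl&[[E1 E2]|[E1 E2]]).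
      + subst x. apply phiinj in E2; auto. subst; auto.
      + exfalso. apply (Hdisj a). split; auto. rewrite E1; auto.
    - intros; exists a, b; auto 10. }
  assert (adjYX : forall a b, X a -> X b -> adj (phi b) a <-> L a b).
  { intros a b Ha Hb; rewrite <- adjXY; auto; split; apply sym. }
  assert (noXX : forall u v, X u -> X v -> ~ adj u v).
  { intros u v Hu Hv; rewrite Hadj; intros (x&x'&Hx&Hx'&_&[[_ E]|[E _]]).
    - apply (Hdisj v); split; auto; rewrite E; auto.
    - apply (Hdisj u); split; auto; rewrite E; auto. }
  assert (noYY : forall u v, Y u -> Y v -> ~ adj u v).
  { intros u v Hu Hv; rewrite Hadj; intros (x&x'&Hx&Hx'&_&[[E _]|[_ E]]).
    - apply (Hdisj u); split; auto; rewrite E; auto.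
    - apply (Hdisj v); split; auto; rewrite E; auto. }
  assert (clos : forall u w v, M u -> M w -> adj v u -> ~ adj v w -> M v).
  { intros u w v Mu Mw H1 H2. apply NNPP; intro Hn.
    destruct (HM v Hn) as [H|H]; [apply H2; apply H; auto | apply (H u); auto]. }
  assert (full : forall c, X c -> M c -> M (phi c) -> forall v, M v).
  { intros c Hc Mc Mpc.
    assert (H : forall d, X d -> M d /\ M (phi d)).
    { intros d Hd. destruct (classic (d = c)) as [->|Hne]; [auto|].
      destruct (Ltot d c Hd Hc) as [Hdc|Hcd].
      - assert (Md : M d).
        { apply (clos (phi c) c d Mpc Mc); [apply adjXY; auto | apply noXX; auto]. }
        split; auto. apply (clos d c (phi d) Md Mc).
        + apply adjYX; auto.
        + rewrite adjYX; auto; intro; apply Hne; apply Lanti; auto.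
      - assert (Mpd : M (phi d)).
        { apply (clos c (phi c) (phi d) Mc Mpc); [apply adjYX; auto | apply noYY; auto]. }
        split; auto. apply (clos (phi d) (phi c) d Mpd Mpc).
        + apply adjXY; auto.
        + rewrite adjXY; auto; intro; apply Hne; apply Lanti; auto. }
    intro v. destruct (HXY v) as [Hv|Hv]. apply H; auto.
    destruct (phisurj v Hv) as (d&Hd&<-). apply H; auto. }
  assert (two : forall u w, M u -> M w -> u <> w -> forall v, M v).
  { intros u w Mu Mw Hne.
    destruct (HXY u) as [Xu|Yu]; destruct (HXY w) as [Xw|Yw].
    - destruct (Ltot u w Xu Xw) as [Luw|Lwu].
      + apply (full u Xu Mu). apply (clos u w (phi u) Mu Mw).
        * apply adjYX; auto.
        * rewrite adjYX; auto; intro; apply Hne; apply Lanti; auto.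
      + apply (full w Xw Mw). apply (clos w u (phi w) Mw Mu).
        * apply adjYX; auto.
        * rewrite adjYX; auto; intro; apply Hne; apply Lanti; auto.
    - apply (full u Xu Mu). apply (clos u w (phi u) Mu Mw).
      + apply adjYX; auto.
      + apply noYY; auto.
    - apply (full w Xw Mw). apply (clos w u (phi w) Mw Mu).
      + apply adjYX; auto.
      + apply noYY; auto.
    - destruct (phisurj u Yu) as (a&Ha&<-).
      destruct (phisurj w Yw) as (b&Hb&<-).
      assert (Hab : a <> b) by (intro; subst; auto).
      destruct (Ltot a b Ha Hb) as [Lab|Lba].
      + apply (full b Hb); auto. apply (clos (phi b) (phi a) b Mw Mu).
        * apply adjXY; auto.
        * rewrite adjXY; auto; intro; apply Hab; apply Lanti; auto.
      + apply (full a Ha); auto. apply (clos (phi a) (phi b) a Mu Mw).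
        * apply adjXY; auto.
        * rewrite adjXY; auto; intro; apply Hab; apply Lanti; auto. }
  unfold trivial_set.
  destruct (classic (exists v, M v)) as [[v Mv]|Hn].
  - destruct (classic (exists w, M w /\ w <> v)) as [[w [Mw Hw]]|Hn2].
    + right; left; apply (two w v); auto.
    + right; right; exists v; intro u; split.
      * intro Mu; apply NNPP; intro; apply Hn2; eauto.
      * intros ->; auto.
  - left; intros v Mv; apply Hn; eauto.
Qed.
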